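(* Let $q\ge 2$ be a prime power, $n=q^2(q^2-q+1)$, and $X\subseteq V(H_q)$ with $|X|=k$. Partition $\mathcal T_X$ into $\mathcal S\sqcup\mathcal M\sqcup\mathcal L$, where $\mathcal S=\{T\in\mathcal T_X : |T|\le \sqrt{2k}/\log n\}$, $\mathcal M=\{T\in\mathcal T_X: \sqrt{2k}/\log n<|T|\le\sqrt{2k}\}$, $\mathcal L=\{T\in\mathcal T_X: |T|>\sqrt{2k}\}$. For $\mathcal U\subseteq\mathcal T_X$ write $v(\mathcal U)=\sum_{T\in\mathcal U}|T|$. Then \[ v(\mathcal L)\le 2k \qquad\text{and}\qquad v(\mathcal S\sqcup\mathcal M)\ge (q-1)k-q^3-1. \]
   Context: $\mathcal H$ is the Hermitian unital $\{\langle x,y,z\rangle : x^{q+1}+y^{q+1}+z^{q+1}=0\}$ in the projective plane $\mathrm{PG}(2,q^2)$ (it has $q^3+1$ points and every line meets it in $1$ or $q+1$ points; lines meeting it in $q+1$ points are secants). $H_q$ is the graph on the set of secants, two distinct secants adjacent iff they meet in a point of $\mathcal H$. For $P\in\mathcal H$, $C_P$ is the set of secants through $P$ and $\mathcal C=\{C_P:P\in\mathcal H\}$; these are $q^3+1$ cliques of order $q^2$, any two sharing exactly one vertex, and every vertex lies in exactly $q+1$ of them. For $X\subseteq V(H_q)$, $\mathcal T_X=\{X\cap C : C\in\mathcal C,\ |X\cap C|\ge 2\}$ (indexed by the cliques $C$). Logarithms are natural. *)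

(* Defs.v *)
From HB Require Import structures.
From mathcomp Require Import all_boot all_order all_algebra.
From mathcomp Require Import reals exp.
Unset Printing Implicit Defensive.
Import Order.TTheory GRing.Theory Num.Theory.
Local Open Scope ring_scope.

Section Hermitian.
Variables (F : finFieldType) (q : nat).

Definition vec := (F * F * F)%type.
Definition vx (v : vec) : F := v.1.1.
Definition vy (v : vec) : F := v.1.2.
Definition vz (v : vec) : F := v.2.
Definition vscale (c : F) (v : vec) : vec := (c * vx v, c * vy v, c * vz v).
Definition vdot (a v : vec) : F := vx a * vx v + vy a * vy v + vz a * vz v.
Definition nonzero_vecs : {set vec} := [set v : vec | v != (0, 0, 0)].

(* projective point <v> of PG(2,F), represented as the set of nonzero
   vectors spanning the same 1-dimensional subspace *)
Definition pt (v : vec) : {set vec} :=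
  [set vscale c v | c in [set c : F | c != 0]].
Definition PG_points : {set {set vec}} := [set pt v | v in nonzero_vecs].

Definition PG_line (a : vec) : {set {set vec}} :=
  [set P in PG_points | [exists v in P, vdot a v == 0]].
Definition PG_lines : {set {set {set vec}}} :=
  [set PG_line a | a in nonzero_vecs].

Definition herm (v : vec) : bool :=
  vx v ^+ q.+1 + vy v ^+ q.+1 + vz v ^+ q.+1 == 0.
Definition unital : {set {set vec}} :=
  [set pt v | v in [set v in nonzero_vecs | herm v]].

(* secants: lines meeting the unital in q+1 points = vertices of H_q *)
Definition secants : {set {set {set vec}}} :=
  [set l in PG_lines | #|l :&: unital| == q.+1]%N.

Definition clique (P : {set vec}) : {set {set {set vec}}} :=
  [set l in secants | P \in l].

(* |X ∩ C_P|; the family T_X is indexed by the P in the unital with this >= 2 *)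
Definition tsize (X : {set {set {set vec}}}) (P : {set vec}) : nat :=
  #|X :&: clique P|.
Definition inTX (X : {set {set {set vec}}}) (P : {set vec}) : bool :=
  (P \in unital) && (2 <= tsize X P)%N.

End Hermitian.

Section Classes.
Variables (R : realType) (F : finFieldType) (q : nat)
  (X : {set {set {set vec F}}}) (k n : nat).

Definition inS (P : {set vec F}) : bool :=
  inTX F q X P && ((tsize F q X P)%:R <= Num.sqrt (2 * k%:R) / ln (n%:R : R)).
Definition inM (P : {set vec F}) : bool :=
  inTX F q X P && (Num.sqrt (2 * k%:R) / ln (n%:R : R) < (tsize F q X P)%:R)
             && ((tsize F q X P)%:R <= Num.sqrt (2 * k%:R : R)).
Definition inL (P : {set vec F}) : bool :=
  inTX F q X P && (Num.sqrt (2 * k%:R : R) < (tsize F q X P)%:R).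

Definition v_of (U : pred {set vec F}) : nat :=
  (\sum_(P in unital F q | U P) tsize F q X P)%N.
End Classes.

(* Main.v *)
Require Import Defs.
From HB Require Import structures.
From mathcomp Require Import all_boot all_order all_algebra.
From mathcomp Require Import reals exp.
From mathcomp Require Import finfield.
From mathcomp Require Import zify ring lra.
Import Order.TTheory GRing.Theory Num.Theory.
Local Open Scope ring_scope.

Lemma card_roots_lt (R : finFieldType) (p : {poly R}) :
  p != 0 -> (#|[set x | root p x]| < size p)%N.
Proof.
move=> p0; rewrite cardE; apply: max_poly_roots => //.
  by apply/allP=> x; rewrite mem_enum inE.
exact: enum_uniq.
Qed.

Lemma card_pow_eq (R : finFieldType) (m : nat) (c : R) :
  (0 < m)%N -> (#|[set x : R | x ^+ m == c]| <= m)%N.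
Proof.
move=> m0.
have p0 : ('X^m - c%:P : {poly R}) != 0.
  by rewrite -size_poly_eq0 size_XnsubC.
have := @card_roots_lt _ _ p0; rewrite size_XnsubC // ltnS.
apply: leq_trans; apply: subset_leq_card; apply/subsetP=> x.
by rewrite !inE rootE !hornerE subr_eq0.
Qed.

Section FF.
Variables (F : finFieldType) (q : nat).
Hypothesis q2 : (2 <= q)%N.
Hypothesis cardF : #|F| = (q ^ 2)%N.

Lemma pow_q2 (x : F) : x ^+ (q ^ 2) = x.
Proof. by rewrite -cardF expf_card. Qed.

Lemma norm_in (x : F) : x != 0 -> (x ^+ q.+1) ^+ q.-1 = 1.
Proof.
move=> x0; rewrite -exprM.
have e : (q.+1 * q.-1 = (q ^ 2).-1)%N by case: q q2 => // n _; rewrite /= mulnC; lia.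
rewrite e; apply: (mulIf x0); rewrite mul1r -exprSr prednK ?pow_q2 //.
by rewrite expn_gt0; case: q q2.
Qed.

Lemma m1_in : (-1 : F)%R ^+ q.-1 = 1.
Proof.
case/boolP: (odd q) => oq.
  rewrite -signr_odd; case: q q2 oq => // n _ /= /negbTE ->; by rewrite expr0.
have h := pow_q2 (-1).
have e2 : ~~ odd (q ^ 2) by rewrite oddX (negbTE oq) ?andbF.
rewrite -signr_odd (negbTE e2) expr0 in h.
by rewrite -h expr1n.
Qed.

Lemma card_m1 : (q.+1 <= #|[set y : F | y ^+ q.+1 == (-1 : F)%R]|)%N.
Proof.
pose S := [set c : F | c ^+ q.-1 == 1].
pose fib c := #|[set x : F | x ^+ q.+1 == c]|.
have q1 : (0 < q.-1)%N by case: q q2 => [|[]].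
have cS : (#|S| <= q.-1)%N by apply: card_pow_eq.
have mS : (-1 : F)%R \in S by rewrite inE m1_in.
have tot : ((q ^ 2).-1 <= \sum_(c in S) fib c)%N.
  have -> : ((q ^ 2).-1 = #|[set x : F | x != 0%R]|)%N.
    by rewrite -cardF -(cardsC1 (0 : F)); apply: eq_card => x; rewrite !inE.
  rewrite /fib.
  under eq_bigr do rewrite -sum1_card.
  rewrite (exchange_big_dep predT) //= -sum1_card.
  rewrite [X in (X <= _)%N]big_mkcond; apply: leq_sum => x _; rewrite inE.
  case: (x =P 0) => // /eqP x0.
  rewrite (bigD1 (x ^+ q.+1)) /=; last by rewrite !inE norm_in ?eqxx.
  by [].
rewrite (bigD1 (-1 : F)%R) //= in tot.
have rest : (\sum_(c in S | c != (-1 : F)%R) fib c <= (q - 2) * q.+1)%N.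
  apply: (@leq_trans (\sum_(c in S | c != (-1 : F)%R) q.+1)).
    by apply: leq_sum => c _; apply: card_pow_eq.
  rewrite sum_nat_const leq_mul2r; apply/orP; right.
  have : (#|[predD1 S & (-1 : F)%R]| = #|S| - 1)%N.
    by rewrite (cardD1 (-1 : F)%R S) mS add1n subn1.
  move=> h; rewrite (_ : #|(fun i : F => (i \in S) && (i != (-1 : F)%R))| = #|[predD1 S & (-1 : F)%R]|); last first.
    by apply: eq_card => c; rewrite -topredE /= !inE andbC.
  rewrite h; lia.
rewrite /fib in tot rest.
have := leq_trans tot (leq_add (leqnn _) rest).
nia.
Qed.
End FF.

Set Implicit Arguments. Unset Strict Implicit.

Section Geo.
Variable F : finFieldType.

Lemma vscale_comp (c d : F) (v : vec F) :
  vscale F d (vscale F c v) = vscale F (d * c) v.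
Proof. by case: v => [[x y] z]; rewrite /vscale /vx /vy /vz /= !mulrA. Qed.

Lemma vscale1 (v : vec F) : vscale F 1 v = v.
Proof. by case: v => [[x y] z]; rewrite /vscale /vx /vy /vz /= !mul1r. Qed.

Lemma pt_scale (c : F) (v : vec F) : c != 0 -> pt F (vscale F c v) = pt F v.
Proof.
move=> c0; apply/setP=> w; apply/imsetP/imsetP => -[d].
  rewrite inE => d0 ->; exists (d * c); first by rewrite inE mulf_neq0.
  by rewrite vscale_comp.
rewrite inE => d0 ->; exists (d / c); first by rewrite inE mulf_neq0 ?invr_eq0.
by rewrite vscale_comp divfK.
Qed.

Lemma mem_pt (u w : vec F) : w \in pt F u -> exists2 c, c != 0 & w = vscale F c u.
Proof. by case/imsetP => c; rewrite inE => c0 ->; exists c. Qed.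

Lemma vdot_scale (a v : vec F) (c : F) : vdot F a (vscale F c v) = c * vdot F a v.
Proof. case: v a => [[x y] z] [[a b] e]; rewrite /vdot /vscale /vx /vy /vz /=; ring. Qed.

Lemma herm_scale q (c : F) (v : vec F) : c != 0 -> herm F q (vscale F c v) = herm F q v.
Proof.
move=> c0; case: v => [[x y] z]; rewrite /herm /vscale /vx /vy /vz /= !exprMn.
rewrite -!mulrDr mulf_eq0 expf_eq0 (negbTE c0) andbF //.
Qed.

End Geo.


Section Count.
Variables (F : finFieldType) (q : nat).
Hypothesis q2 : (2 <= q)%N.
Hypothesis cardF : #|F| = (q ^ 2)%N.

Lemma herm_xyz (x y z : F) : herm F q ((x, y), z) = (x ^+ q.+1 + y ^+ q.+1 + z ^+ q.+1 == 0).
Proof. by []. Qed.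

Lemma card_unital : (#|unital F q| <= q ^ 3 + 1)%N.
Proof.
pose g1 := fun p : F * F => pt F ((p.2, p.1), 1).
pose A1 := [set p : F * F | herm F q ((p.2, p.1), 1)].
pose g2 := fun x : F => pt F ((x, 1), 0).
pose A2 := [set x : F | herm F q ((x, 1), 0)].
have sub : unital F q \subset g1 @: A1 :|: g2 @: A2.
  apply/subsetP => P /imsetP [v]; rewrite inE => /andP [nz hv] ->.
  case: v nz hv => [[x y] z] nz hv.
  have nz' : ((x, y), z) != ((0, 0), 0) by move: nz; rewrite inE.
  case: (eqVneq z 0) => [z0 | z0].
    case: (eqVneq y 0) => [y0 | y0].
      exfalso; move: hv nz'; rewrite herm_xyz z0 y0 !expr0n /= !addr0 expf_eq0 /=.
      by move/eqP->; rewrite eqxx.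
    have e : vscale F y^-1 ((x, y), z) = ((x / y, 1), 0).
      by rewrite /vscale /vx /vy /vz /= z0 mulr0 mulVf // mulrC.
    apply/setUP; right; apply/imsetP; exists (x / y).
      by rewrite inE -e herm_scale ?invr_eq0.
    by rewrite /g2 -e pt_scale ?invr_eq0.
  have e : vscale F z^-1 ((x, y), z) = ((x / z, y / z), 1).
    by rewrite /vscale /vx /vy /vz /= mulVf // (mulrC _ x) (mulrC _ y).
  apply/setUP; left; apply/imsetP; exists (y / z, x / z).
    by rewrite inE /= -e herm_scale ?invr_eq0.
  by rewrite /g1 /= -e pt_scale ?invr_eq0.
have c2 : (#|A2| <= q.+1)%N.
  apply: (leq_trans _ (@card_pow_eq F q.+1 (-1) isT)).
  apply: subset_leq_card; apply/subsetP => x.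
  by rewrite !inE herm_xyz expr1n expr0n /= addr0 addr_eq0.
pose Y := [set y : F | y ^+ q.+1 == -1].
have cY := card_m1 F q q2 cardF.
have c1 : (#|A1| <= #|Y| + #|~: Y| * q.+1)%N.
  rewrite -sum1_card big_mkcond /=.
  rewrite (_ : (\sum_p _)%N = \sum_y \sum_x (if (y, x) \in A1 then 1 else 0))%N; last first.
    by rewrite pair_bigA; apply: eq_bigr => -[].
  rewrite (bigID (fun y => y \in Y)) /=.
  apply: leq_add.
    rewrite -sum1_card; apply: leq_sum => y yY.
    rewrite -big_mkcond sum1_card /=.
    apply: (@leq_trans #|[set (0 : F)]|); last by rewrite cards1.
    apply: subset_leq_card; apply/subsetP => x.
    rewrite inE in yY; rewrite inE => h; have : (y, x) \in A1 by exact: h.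
    rewrite inE herm_xyz expr1n (eqP yY).
    by rewrite -addrA addNr addr0 expf_eq0.
  rewrite -sum1_card big_distrl /=.
  rewrite [X in (X <= _)%N](eq_bigl (fun i => i \in ~: Y)); last by move=> i /=; rewrite !inE.
  apply: leq_sum => y yY.
  rewrite mul1n -big_mkcond sum1_card /=.
  apply: (leq_trans _ (@card_pow_eq F q.+1 (- (y ^+ q.+1 + 1)) isT)).
  apply: subset_leq_card; apply/subsetP => x.
  move=> h; have : (y, x) \in A1 by exact: h.
  by rewrite !inE herm_xyz expr1n /= -addrA addr_eq0.
have cYY : (#|Y| + #|~: Y| = q ^ 2)%N by rewrite cardsC cardF.
apply: (leq_trans (subset_leq_card sub)).
apply: (leq_trans (leq_card_setU _ _).1).
apply: (leq_trans (leq_add (leq_imset_card _ _) (leq_imset_card _ _))).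
move: c1 c2 cY cYY; set a := #|Y|; set b := #|~: Y|; rewrite -/A1 -/A2.
nia.
Qed.
End Count.

Section Lines.
Variable F : finFieldType.

Definition cross (u w : vec F) : vec F :=
  ((vy F u * vz F w - vz F u * vy F w, vz F u * vx F w - vx F u * vz F w),
   vx F u * vy F w - vy F u * vx F w).

Ltac finq e1 e2 e3 :=
  first [ by []
        | by rewrite (eqP e1) | by rewrite -(eqP e1) | by rewrite mulrC (eqP e1) | by rewrite mulrC -(eqP e1)
        | by rewrite (mulrC _ (_ : F)) (eqP e1) | by rewrite (eqP e1) mulrC | by rewrite -(eqP e1) mulrC
        | by rewrite (eqP e2) | by rewrite -(eqP e2) | by rewrite mulrC (eqP e2) | by rewrite mulrC -(eqP e2)
        | by rewrite (eqP e2) mulrC | by rewrite -(eqP e2) mulrC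
        | by rewrite (eqP e3) | by rewrite -(eqP e3) | by rewrite mulrC (eqP e3) | by rewrite mulrC -(eqP e3)
        | by rewrite (eqP e3) mulrC | by rewrite -(eqP e3) mulrC ].

Lemma parallel (a m : vec F) : m != ((0, 0), 0) -> cross a m = ((0, 0), 0) ->
  exists c, a = vscale F c m.
Proof.
case: a m => [[a1 a2] a3] [[m1 m2] m3] m0.
rewrite /cross /vscale /vx /vy /vz /= => -[/eqP e1 /eqP e2 /eqP e3].
rewrite !subr_eq0 in e1 e2 e3.
case: (eqVneq m1 0) => [z1|n1].
  case: (eqVneq m2 0) => [z2|n2].
    case: (eqVneq m3 0) => [z3|n3].
      by move: m0; rewrite z1 z2 z3 eqxx.
    exists (a3 / m3); congr ((_, _), _); apply: (mulIf n3); rewrite mulrAC divfK //; finq e1 e2 e3.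
  exists (a2 / m2); congr ((_, _), _); apply: (mulIf n2); rewrite mulrAC divfK //; finq e1 e2 e3.
exists (a1 / m1); congr ((_, _), _); apply: (mulIf n1); rewrite mulrAC divfK //; finq e1 e2 e3.
Qed.


Lemma cross_perp (a u w : vec F) : vdot F a u = 0 -> vdot F a w = 0 ->
  cross a (cross u w) = ((0, 0), 0).
Proof.
case: a u w => [[a1 a2] a3] [[u1 u2] u3] [[w1 w2] w3].
rewrite /cross /vdot /vx /vy /vz /= => hu hw; congr ((_, _), _).
- transitivity (u1 * (a1 * w1 + a2 * w2 + a3 * w3) - w1 * (a1 * u1 + a2 * u2 + a3 * u3)); first ring.
  by rewrite hu hw !mulr0 subrr.
- transitivity (u2 * (a1 * w1 + a2 * w2 + a3 * w3) - w2 * (a1 * u1 + a2 * u2 + a3 * u3)); first ring.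
  by rewrite hu hw !mulr0 subrr.
- transitivity (u3 * (a1 * w1 + a2 * w2 + a3 * w3) - w3 * (a1 * u1 + a2 * u2 + a3 * u3)); first ring.
  by rewrite hu hw !mulr0 subrr.
Qed.

Lemma cross_anti (u w : vec F) : cross u w = ((0, 0), 0) -> cross w u = ((0, 0), 0).
Proof.
case: u w => [[u1 u2] u3] [[w1 w2] w3].
rewrite /cross /vx /vy /vz /= => -[e1 e2 e3]; congr ((_, _), _).
- by transitivity (- (u2 * w3 - u3 * w2)); [ring | rewrite e1 oppr0].
- by transitivity (- (u3 * w1 - u1 * w3)); [ring | rewrite e2 oppr0].
- by transitivity (- (u1 * w2 - u2 * w1)); [ring | rewrite e3 oppr0].
Qed.

Lemma vscale0 (u : vec F) : vscale F 0 u = ((0, 0), 0).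
Proof. by rewrite /vscale !mul0r. Qed.

Lemma vdot_scalel (a v : vec F) (c : F) : vdot F (vscale F c a) v = c * vdot F a v.
Proof. case: v a => [[x y] z] [[a b] e]; rewrite /vdot /vscale /vx /vy /vz /=; ring. Qed.

Lemma line_scale (c : F) (a : vec F) : c != 0 -> PG_line F (vscale F c a) = PG_line F a.
Proof.
move=> c0; apply/setP => P; rewrite !inE; congr (_ && _).
by apply: eq_existsb => v; rewrite vdot_scalel mulf_eq0 (negbTE c0).
Qed.

Lemma on_line (a u : vec F) : pt F u \in PG_line F a -> vdot F a u = 0.
Proof.
rewrite inE => /andP [_ /existsP [v /andP [vin /eqP hv]]].
case: (mem_pt vin) => c c0 e; rewrite e vdot_scale in hv.
by move/eqP: hv; rewrite mulf_eq0 (negbTE c0) /= => /eqP.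
Qed.

Lemma line_eq (a u w : vec F) : a != ((0, 0), 0) -> u != ((0, 0), 0) ->
  w != ((0, 0), 0) -> pt F u != pt F w -> vdot F a u = 0 -> vdot F a w = 0 ->
  PG_line F a = PG_line F (cross u w).
Proof.
move=> a0 u0 w0 uw hu hw.
have m0 : cross u w != ((0, 0), 0).
  apply/eqP => /cross_anti /(parallel u0) [c ec].
  have c0 : c != 0 by apply: contraNneq w0 => c0; rewrite ec c0 vscale0.
  by move: uw; rewrite ec pt_scale // eqxx.
have [c ec] := parallel m0 (cross_perp hu hw).
have c0 : c != 0 by apply: contraNneq a0 => c0; rewrite ec c0 vscale0.
by rewrite ec line_scale.
Qed.

End Lines.

Lemma key (R : realType) (r n S a K : R) : 0 <= r -> r ^+ 2 = 2 * K -> n <= r -> r < n + 1 ->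
  2 * (a + S) <= 2 * K + (n + 1) * n -> n * r <= S -> r < a -> False.
Proof. move=> *; nra. Qed.

Section Comb.
Variables (T : finType) (I : eqType) (f : I -> {set T}).

Lemma cap_bigcup_le (A : {set T}) (s : seq I) :
  (forall j, j \in s -> #|A :&: f j| <= 1)%N -> (#|A :&: \bigcup_(j <- s) f j| <= size s)%N.
Proof.
elim: s => [|x s IH] h; first by rewrite big_nil setI0 cards0.
rewrite big_cons setIUr (leq_trans (leq_card_setU _ _).1) // /= -add1n.
apply: leq_add; first by apply: h; rewrite inE eqxx.
by apply: IH => j js; apply: h; rewrite inE js orbT.
Qed.

Lemma union_bound (s : seq I) : uniq s ->
  {in s &, forall i j, i != j -> #|f i :&: f j| <= 1}%N ->
  (2 * \sum_(i <- s) #|f i| <= 2 * #|\bigcup_(i <- s) f i| + size s * (size s).-1)%N.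
Proof.
elim: s => [|x s IH] /=; first by rewrite !big_nil.
move=> /andP [xs us] h.
have h' : {in s &, forall i j, i != j -> #|f i :&: f j| <= 1}%N.
  by move=> i j i_s js; apply: h; rewrite inE ?i_s ?js orbT.
have := IH us h'.
have c : (#|f x :&: \bigcup_(j <- s) f j| <= size s)%N.
  apply: cap_bigcup_le => j js; apply: h; rewrite ?inE ?eqxx ?js ?orbT //.
  by apply: contraNneq xs => ->.
have u := cardsUI (f x) (\bigcup_(j <- s) f j).
rewrite !big_cons.
move: c u; set a := #|f x|; set b := #|_ :&: _|; set U := #|_ :|: _|.
set S := (\sum_(i <- s) _)%N; set U' := #|\bigcup_(j <- s) _|.
case: (size s) => [|n] /=; nia.
Qed.

Variable (R : realType).

Lemma sum_lower (r : R) (s : seq I) : (forall i, i \in s -> r < #|f i|%:R) ->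
  (size s)%:R * r <= (\sum_(i <- s) #|f i|)%:R.
Proof.
elim: s => [|x s IH] h; first by rewrite big_nil mul0r.
rewrite big_cons natrD /= -addn1 natrD mulrDl mul1r addrC.
apply: lerD; first by apply: ltW; apply: h; rewrite inE eqxx.
by apply: IH => i i_s; apply: h; rewrite inE i_s orbT.
Qed.

Lemma L_size (r : R) (k : nat) (X : {set T}) (s : seq I) :
  0 <= r -> r ^+ 2 = 2 * k%:R -> #|X| = k -> uniq s ->
  {in s &, forall i j, i != j -> #|f i :&: f j| <= 1}%N ->
  (forall i, i \in s -> f i \subset X) ->
  (forall i, i \in s -> r < #|f i|%:R) ->
  (size s)%:R <= r.
Proof.
move=> r0 rk cX.
elim: s => [|x s IH] /=; first by move=> *; rewrite r0.
move=> /andP [xs us] h hs hr.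
have h' : {in s &, forall i j, i != j -> #|f i :&: f j| <= 1}%N.
  by move=> i j i_s js; apply: h; rewrite inE ?i_s ?js orbT.
have IH' : (size s)%:R <= r.
  apply: IH => // i i_s; [apply: hs | apply: hr]; by rewrite inE i_s orbT.
rewrite leNgt; apply/negP => hlt.
have sub : \bigcup_(i <- x :: s) f i \subset X.
  elim: (x :: s) hs => [|y t IHt] ht; first by rewrite big_nil sub0set.
  rewrite big_cons subUset ht ?inE ?eqxx //=.
  by apply: IHt => i it; apply: ht; rewrite inE it orbT.
have cU := subset_leq_card sub; rewrite cX in cU.
have ub := @union_bound (x :: s) (introT andP (conj xs us)) h.
rewrite /= big_cons in ub.
have lo := sum_lower (r := r) (s := s) (fun i i_s => hr i (introT orP (or_intror i_s))).
have hx : r < #|f x|%:R by apply: hr; rewrite inE eqxx.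
move: ub lo hx; set a := #|f x|; set S := (\sum_(i <- s) _)%N; set U := #|_| => ub lo hx.
have ub' : (2 * (a + S) <= 2 * k + (size s).+1 * size s)%N by nia.
have ubR : 2 * (a%:R + S%:R) <= 2 * k%:R + ((size s)%:R + 1) * (size s)%:R :> R.
  have := ub'; rewrite -(ler_nat R) !natrM natrD natrD -addn1 natrD.
  by rewrite !natrM -[(size s).+1]addn1 !natrD.
move: hlt; rewrite -addn1 natrD => hlt.
exact: (key r0 rk IH' hlt ubR lo hx).
Qed.

Lemma mem_behead_ok : True. Proof. by []. Qed.
End Comb.

Lemma bigcup_sub (T : finType) (I : eqType) (f : I -> {set T}) (X : {set T}) (s : seq I) :
  (forall i, i \in s -> f i \subset X) -> \bigcup_(i <- s) f i \subset X.
Proof.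
elim: s => [|y t IHt] ht; first by rewrite big_nil sub0set.
rewrite big_cons subUset ht ?inE ?eqxx //=.
by apply: IHt => i it; apply: ht; rewrite inE it orbT.
Qed.

Lemma clique_inter (F : finFieldType) q (X : {set {set {set vec F}}}) P Q :
  P \in unital F q -> Q \in unital F q -> P != Q ->
  (#|(X :&: clique F q P) :&: (X :&: clique F q Q)| <= 1)%N.
Proof.
case/imsetP => u; rewrite inE => /andP [u0 _] ->.
case/imsetP => w; rewrite inE => /andP [w0 _] -> uw.
rewrite inE in u0; rewrite inE in w0.
have key : forall l, l \in (X :&: clique F q (pt F u)) :&: (X :&: clique F q (pt F w)) ->
    l = PG_line F (cross u w).
  move=> l; rewrite in_setI => /andP [/setIP [_ c1] /setIP [_ c2]].
  rewrite inE in c1; rewrite inE in c2.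
  case/andP: c1 => ls hu; case/andP: c2 => _ hw.
  rewrite inE in ls; case/andP: ls => /imsetP [a]; rewrite inE => a0 el _; subst l.
  exact: line_eq a0 u0 w0 uw (on_line hu) (on_line hw).
by apply/card_le1_eqP => l1 l2 h1 h2; rewrite (key _ h1) (key _ h2).
Qed.

Lemma total_sum (F : finFieldType) q (X : {set {set {set vec F}}}) :
  X \subset secants F q ->
  (\sum_(P in unital F q) Defs.tsize F q X P = #|X| * q.+1)%N.
Proof.
move=> Xs.
have e : forall P, Defs.tsize F q X P = (\sum_(l in X) (if P \in l then 1 else 0))%N.
  move=> P; rewrite /Defs.tsize -sum1_card -big_mkcondr; apply: eq_bigl => l.
  rewrite !inE; case lX: (l \in X) => //=.
  by move: (subsetP Xs l lX); rewrite inE => ->.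
under eq_bigr do rewrite e.
rewrite exchange_big /= -sum1_card big_distrl /=; apply: eq_bigr => l lX.
rewrite mul1n -big_mkcondr sum1_card.
have := subsetP Xs l lX; rewrite inE => /andP [_ /eqP <-].
by apply: eq_card => P; rewrite !inE andbC.
Qed.

Unset Implicit Arguments. Set Strict Implicit.

Theorem mainTheorem5 (R : realType) (q : nat) (F : finFieldType)
  (X : {set {set {set vec F}}}) (k : nat) :
  (2 <= q)%N ->
  (exists p e : nat, prime p /\ q = (p ^ e)%N) ->
  #|F| = (q ^ 2)%N ->
  X \subset secants F q ->
  #|X| = k ->
  let n : nat := (q ^ 2 * (q ^ 2 - q + 1))%N in
  (v_of F q X (inL R F q X k) <= 2 * k)%N /\
  ((v_of F q X (fun P => inS R F q X k n P || inM R F q X k n P))%:R : R)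
    >= (q%:R - 1) * k%:R - (q ^ 3)%:R - 1.
Proof.
move=> q2 _ cardF Xs cX n.
set r : R := Num.sqrt (2 * k%:R).
have r0 : 0 <= r := sqrtr_ge0 _.
have rk : r ^+ 2 = 2 * k%:R by rewrite sqr_sqrtr // mulr_ge0 ?ler0n.
pose f := fun P => X :&: clique F q P.
pose s := filter (inL R F q X k) (enum (unital F q)).
have vL : v_of F q X (inL R F q X k) = (\sum_(P <- s) #|f P|)%N.
  by rewrite /v_of big_filter big_enum_cond.
have smem : forall P, P \in s -> (P \in unital F q) && inL R F q X k P.
  by move=> P; rewrite mem_filter mem_enum andbC.
have us : uniq s by apply: filter_uniq; apply: enum_uniq.
have hpair : {in s &, forall i j, i != j -> #|f i :&: f j| <= 1}%N.
  move=> i j /smem /andP [iu _] /smem /andP [ju _] ij; exact: clique_inter.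
have hsub : forall i, i \in s -> f i \subset X by move=> i _; apply: subsetIl.
have hr : forall i, i \in s -> r < #|f i|%:R.
  by move=> i /smem /andP [_ /andP [_ ]].
have sz := L_size r0 rk cX us hpair hsub hr.
have n2 : ((size s) ^ 2 <= 2 * k)%N.
  rewrite -(ler_nat R) natrX natrM -rk !expr2.
  by apply: ler_pM => //; apply: ler0n.
have ub := union_bound us hpair.
have cU : (#|\bigcup_(i <- s) f i| <= k)%N.
  by rewrite -cX; apply: subset_leq_card; apply: bigcup_sub.
have part1 : (v_of F q X (inL R F q X k) <= 2 * k)%N.
  rewrite vL; move: ub cU n2; set S := (\sum_(i <- s) _)%N; set U := #|_|.
  case: (size s) => [|m] /=; nia.
split => //.
have tot := @total_sum _ _ _ Xs; rewrite cX in tot.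
have cu := card_unital q2 cardF.
have pw : forall P, P \in unital F q ->
   (Defs.tsize F q X P <= (if inS R F q X k n P || inM R F q X k n P then Defs.tsize F q X P else 0)
      + (if inL R F q X k P then Defs.tsize F q X P else 0) + 1)%N.
  move=> P Pu; rewrite /inS /inM /inL /inTX Pu /= -/r.
  set t := Defs.tsize F q X P.
  have [h|h] := leqP 2 t; last by rewrite /=; lia.
  rewrite /=.
  have [h2|h2] := ltrP r t%:R; first by case: ifP => _; lia.
  rewrite /= andbT.
  have [h3|h3] := lerP (t%:R : R) (r / ln (n%:R)); rewrite /=; lia.
have big : (k * q.+1 <= v_of F q X (fun P => inS R F q X k n P || inM R F q X k n P)
              + v_of F q X (inL R F q X k) + #|unital F q|)%N.
  rewrite -tot -sum1_card /v_of !big_mkcondr -!big_split /=.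
  by apply: leq_sum => P Pu; apply: pw.
have big2 : (k * q.+1 <= v_of F q X (fun P => inS R F q X k n P || inM R F q X k n P)
              + 2 * k + (q ^ 3 + 1))%N.
  apply: (leq_trans big); apply: leq_add => //; apply: leq_add => //.
move: big2; set V := v_of _ _ _ _ => big2.
have bigR : (k%:R * (q%:R + 1) <= V%:R + 2 * k%:R + ((q ^ 3)%:R + 1) :> R).
  move: big2; rewrite -(ler_nat R) !natrD !natrM -addn1 !natrD => H; nra.
rewrite natrX; nra.
Qed.
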